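(* Let $n\ge 2$, let $T=\{1,\dots,n\}$ and let $\mathcal T$ be a topology on $T$. Fix an integer $k\ge 1$. Let $A,R,B,S\subseteq T\setminus\{n\}$ with $A\cap R=\emptyset$, $B\cap S=\emptyset$, where every point of $A$ and of $B$ is old (at stage $k$), every point of $R$ and of $S$ is new (at stage $k$), and $R\neq S$. Suppose $A\cup R$, $A\cup R\cup\{n\}$, $B\cup S$ and $B\cup S\cup\{n\}$ are all new $k$-systems of $\mathcal T$. Then $A$, $A\cup\{n\}$, $B$ and $B\cup\{n\}$ are all open in $\mathcal T$.
   Context: For $\alpha\in T$, $\alpha^{*}$ (the covering set of $\alpha$) denotes the smallest open set of $\mathcal T$ containing $\alpha$. For an integer $m\ge 0$, an $m$-system is an open set $P$ of $\mathcal T$ such that $P\setminus\{n\}$ has exactly $m$ points; it is upper if $n\notin P$ and lower if $n\in P$. For fixed $k$, a point $\alpha\neq n$ is called old if $\alpha^{*}$ is an $m$-system for some $m<k$, and new if $\alpha^{*}$ is a $k$-system. A $k$-system is called new if it contains at least one point $p\neq n$ that is not contained in any $m$-system with $m\le k-1$. *)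

(* Defs.v *)
From mathcomp Require Import all_boot.
Set Implicit Arguments. Unset Strict Implicit. Unset Printing Implicit Defensive.

(* Since T is finite, closure under binary unions/intersections is
   equivalent to closure under arbitrary unions/finite intersections. *)
Definition is_topology (T : finType) (O : {set {set T}}) : Prop :=
  [/\ set0 \in O, [set: T] \in O,
      (forall U V, U \in O -> V \in O -> U :|: V \in O) &
      (forall U V, U \in O -> V \in O -> U :&: V \in O)].

(* covering set alpha^* : smallest open set containing alpha
   (intersection of all open sets containing alpha, open by finiteness) *)
Definition cover (T : finType) (O : {set {set T}}) (a : T) : {set T} :=
  \bigcap_(U in O | a \in U) U.

(* m-system w.r.t. the distinguished point top (= the point n) *)
Definition msystem (T : finType) (O : {set {set T}}) (top : T) (m : nat)
  (P : {set T}) : Prop :=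
  P \in O /\ #|P :\ top| = m.

Definition old_pt (T : finType) (O : {set {set T}}) (top : T) (k : nat) (a : T) : Prop :=
  a != top /\ exists m, m < k /\ msystem O top m (cover O a).

Definition new_pt (T : finType) (O : {set {set T}}) (top : T) (k : nat) (a : T) : Prop :=
  a != top /\ msystem O top k (cover O a).

Definition new_ksystem (T : finType) (O : {set {set T}}) (top : T) (k : nat)
  (P : {set T}) : Prop :=
  msystem O top k P /\
  exists p, [/\ p \in P, p != top &
                forall m (Q : {set T}), m <= k - 1 -> msystem O top m Q -> p \notin Q].

(* Main.v *)
Require Import Defs.
From mathcomp Require Import all_boot.
Set Implicit Arguments. Unset Strict Implicit. Unset Printing Implicit Defensive.
Local Notation cover := Defs.cover.

Section Aux.
Variables (T : finType) (O : {set {set T}}) (hO : is_topology O) (top : T) (k : nat).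

Lemma cover_open a : cover O a \in O.
Proof.
case: hO => h0 hT hU hI; rewrite /cover.
apply: (big_ind (fun X => X \in O)) => //;
by move=> U /andP[].
Qed.

Lemma cover_mem a : a \in cover O a.
Proof.
case: hO => h0 hT hU hI.
by apply/bigcapP => U /andP[_ ->].
Qed.

Lemma cover_min a U : U \in O -> a \in U -> cover O a \subset U.
Proof. by move=> HU Ha; apply: bigcap_inf; rewrite HU Ha. Qed.

Lemma bigcup_open (A : {set T}) (F : T -> {set T}) :
  (forall a, a \in A -> F a \in O) -> \bigcup_(a in A) F a \in O.
Proof.
case: hO => h0 hT hU hI => HF.
by apply: (big_ind (fun X => X \in O)) => //.
Qed.

Lemma setD1_notin (X : {set T}) : top \notin X -> X :\ top = X.
Proof.
move=> h; apply/setP => x; rewrite !inE; case: eqP => // ->.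
by rewrite (negbTE h).
Qed.

Lemma clash a : old_pt O top k a -> new_pt O top k a -> False.
Proof.
move=> [_ [m [hm [_ hc]]]] [_ [_ hc']].
by rewrite hc' in hc; rewrite hc ltnn in hm.
Qed.

Lemma cover_new (P : {set T}) r : msystem O top k P -> r \in P ->
  new_pt O top k r -> P :\ top = cover O r :\ top.
Proof.
move=> [HP hc] hr [_ [_ hc']].
have s : cover O r :\ top \subset P :\ top by apply: setSD; exact: cover_min.
apply/eqP; rewrite eq_sym eqEcard s /= hc hc'; done.
Qed.

Lemma cover_sub_A (A R : {set T}) a : top \notin A -> top \notin R ->
  (forall a, a \in R -> new_pt O top k a) ->
  msystem O top k (A :|: R) -> a \in A -> old_pt O top k a ->
  cover O a \subset A.
Proof.
move=> tA tR hR hP ha [_ [m [hm [_ hc]]]].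
apply/subsetP => x hx.
have : x \in A :|: R.
  by apply: (subsetP (cover_min hP.1 _)) hx; rewrite inE ha.
case/setUP => // xR; exfalso.
have xP : x \in A :|: R by rewrite inE xR orbT.
have e := cover_new hP xP (hR _ xR).
have s : cover O x :\ top \subset cover O a :\ top.
  by apply: setSD; apply: cover_min => //; exact: cover_open.
have := subset_leq_card s; rewrite -e hP.2 hc => hle.
by move: (leq_ltn_trans hle hm); rewrite ltnn.
Qed.

Lemma sideA (A R : {set T}) : top \notin A -> top \notin R ->
  (forall a, a \in A -> old_pt O top k a) ->
  (forall a, a \in R -> new_pt O top k a) ->
  msystem O top k (A :|: R) -> A \in O.
Proof.
move=> tA tR hA hR hP.
have -> : A = \bigcup_(a in A) cover O a.
  apply/eqP; rewrite eqEsubset; apply/andP; split.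
    by apply/subsetP => a ha; apply/bigcupP; exists a => //; exact: cover_mem.
  apply/bigcupsP => a ha; exact: (cover_sub_A tA tR hR hP ha (hA _ ha)).
by apply: bigcup_open => a _; exact: cover_open.
Qed.
Lemma key (A R B S : {set T}) r : top \notin A -> top \notin R ->
  top \notin B -> top \notin S ->
  (forall a, a \in A -> old_pt O top k a) ->
  (forall a, a \in B -> old_pt O top k a) ->
  (forall a, a \in R -> new_pt O top k a) ->
  (forall a, a \in S -> new_pt O top k a) ->
  msystem O top k (A :|: R) -> msystem O top k (B :|: S) ->
  msystem O top k (top |: (B :|: S)) ->
  r \in R -> r \in cover O top -> R = S.
Proof.
move=> tA tR tB tS hA hB hR hS hP hQ hQt rR rc.
have tP : top \notin A :|: R by rewrite inE negb_or tA tR.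
have tQ : top \notin B :|: S by rewrite inE negb_or tB tS.
have rP : r \in A :|: R by rewrite inE rR orbT.
have e := cover_new hP rP (hR _ rR).
rewrite setD1_notin // in e.
have s1 : cover O r \subset cover O top by apply: cover_min => //; exact: cover_open.
have s2 : cover O top \subset top |: (B :|: S).
  by apply: cover_min; [exact: hQt.1 | exact: setU11].
have sub : A :|: R \subset B :|: S.
  apply/subsetP => x hx.
  have : x \in cover O r :\ top by rewrite -e.
  rewrite inE => /andP[xt xc].
  have := subsetP s2 x (subsetP s1 x xc).
  by rewrite inE (negbTE xt).
have eq : A :|: R = B :|: S.
  apply/eqP; rewrite eqEcard sub /=.
  by move: hP.2 hQ.2; rewrite !setD1_notin // => -> ->.
apply/setP => x; apply/idP/idP => hx.
  have : x \in B :|: S by rewrite -eq inE hx orbT.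
  case/setUP => // xB; exfalso; exact: (clash (hB _ xB) (hR _ hx)).
have : x \in A :|: R by rewrite eq inE hx orbT.
case/setUP => // xA; exfalso; exact: (clash (hA _ xA) (hS _ hx)).
Qed.

Lemma sideAt (A R B S : {set T}) : top \notin A -> top \notin R ->
  top \notin B -> top \notin S ->
  (forall a, a \in A -> old_pt O top k a) ->
  (forall a, a \in B -> old_pt O top k a) ->
  (forall a, a \in R -> new_pt O top k a) ->
  (forall a, a \in S -> new_pt O top k a) ->
  R != S ->
  msystem O top k (A :|: R) -> msystem O top k (top |: (A :|: R)) ->
  msystem O top k (B :|: S) ->
  msystem O top k (top |: (B :|: S)) -> top |: A \in O.
Proof.
move=> tA tR tB tS hA hB hR hS hRS hP hPt hQ hQt.
have hA' := sideA tA tR hA hR hP.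
have sub : cover O top \subset top |: A.
  apply/subsetP => x hx.
  have := subsetP (cover_min hPt.1 (setU11 top (A :|: R))) x hx.
  rewrite !inE; case/orP => [->//|]; case/orP => [->|xR]; first by rewrite orbT.
  have := key tA tR tB tS hA hB hR hS hP hQ hQt xR hx.
  by move/eqP: hRS.
have -> : top |: A = cover O top :|: A.
  apply/eqP; rewrite eqEsubset; apply/andP; split.
    by apply/subsetP => x; rewrite !inE; case/orP => [/eqP->|->];
      rewrite ?cover_mem ?orbT.
  by apply/subsetP => x; rewrite inE; case/orP => [/(subsetP sub)//|]; rewrite inE => ->; rewrite orbT.
by case: hO => _ _ hU _; apply: hU => //; exact: cover_open.
Qed.
End Aux.

Theorem lemma4 (n : nat) (hn : 1 <= n) (O : {set {set 'I_n.+1}})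
  (hO : is_topology O) (k : nat) (hk : 1 <= k)
  (A R B S : {set 'I_n.+1}) :
  ord_max \notin A -> ord_max \notin R -> ord_max \notin B -> ord_max \notin S ->
  [disjoint A & R] -> [disjoint B & S] ->
  (forall a, a \in A -> old_pt O ord_max k a) ->
  (forall a, a \in B -> old_pt O ord_max k a) ->
  (forall a, a \in R -> new_pt O ord_max k a) ->
  (forall a, a \in S -> new_pt O ord_max k a) ->
  R != S ->
  new_ksystem O ord_max k (A :|: R) ->
  new_ksystem O ord_max k (ord_max |: (A :|: R)) ->
  new_ksystem O ord_max k (B :|: S) ->
  new_ksystem O ord_max k (ord_max |: (B :|: S)) ->
  [/\ A \in O, ord_max |: A \in O, B \in O & ord_max |: B \in O].
Proof.
move=> tA tR tB tS _ _ hA hB hR hS hRS [hP _] [hPt _] [hQ _] [hQt _].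
split.
- exact: (sideA hO tA tR hA hR hP).
- exact: (sideAt hO tA tR tB tS hA hB hR hS hRS hP hPt hQ hQt).
- exact: (sideA hO tB tS hB hS hQ).
- by apply: (sideAt hO tB tS tA tR hB hA hS hR _ hQ hQt hP hPt); rewrite eq_sym.
Qed.
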